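(* Let $\alpha=(\alpha_1,\ldots,\alpha_m)$ be a partition of $n$ and $r\ge 1$ an integer. Then $$\mathbf{C}_{\alpha}(\mathbf{z})\circ p_1^r=\mathbf{C}_{\alpha^r}(\mathbf{z}),$$ where $\alpha^r$ is the partition of $nr$ containing exactly $r$ copies of each part of $\alpha$, and $\circ$ denotes plethysm.
   Context: For a partition $\alpha$ of $n$ let $\sigma_\alpha\in S_n$ be any permutation of cycle type $\alpha$ and $o(\sigma_\alpha)$ its order. The cyclic symmetric function of the first kind is $\mathbf{C}_\alpha(\mathbf{z})=\frac{1}{o(\sigma_\alpha)}\sum_{g\in\langle\sigma_\alpha\rangle}p_{\lambda(g)}$, where $\lambda(g)$ is the cycle type of $g$ and $p_\lambda$ is the power-sum symmetric function (this is the cycle index series of the molecular species $X^n/\langle\sigma_\alpha\rangle$). Plethysm with $p_1^r$: $f\circ p_1^r$ is obtained from $f$ (written in power sums) by substituting $p_k\mapsto p_k^r$ for all $k$. *)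

(* Defs.v *)
From HB Require Import structures.
From mathcomp Require Import all_boot all_order all_algebra all_fingroup.
From mathcomp Require Import mpoly.
Set Implicit Arguments. Unset Strict Implicit. Unset Printing Implicit Defensive.
Import GRing.Theory.
Local Open Scope ring_scope.

(* Symmetric functions over Q written in the power-sum basis: since the
   power sums p_1, p_2, ... are algebraically independent, the (degree <= N
   part of the) ring of symmetric functions is the polynomial ring
   Q[p_1,...,p_N].  Variable 'X_(k-1) of {mpoly rat[N]} stands for p_k. *)
Definition psum (N k : nat) : {mpoly rat[N]} :=
  match @insub nat (fun i => i < N)%N _ k.-1 with
  | Some i => 'X_i
  | None => 0
  end.

Definition p_cycletype (N n : nat) (g : 'S_n) : {mpoly rat[N]} :=
  \prod_(C in porbits g) psum N #|C|.

Definition has_cycle_type (n : nat) (g : 'S_n) (alpha : seq nat) : bool :=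
  perm_eq [seq #|(C : {set 'I_n})| | C <- enum (porbits g)] alpha.

Definition is_partition (alpha : seq nat) (n : nat) : bool :=
  all (fun a => 0 < a)%N alpha && (sumn alpha == n).

Definition part_rep (alpha : seq nat) (r : nat) : seq nat :=
  flatten [seq nseq r a | a <- alpha].

(* Cyclic symmetric function of the first kind, C_alpha, computed from a
   permutation sigma of cycle type alpha:
   (1 / o(sigma)) * sum_{g in <sigma>} p_{lambda(g)}. *)
Definition cyclicC (N n : nat) (sigma : 'S_n) : {mpoly rat[N]} :=
  (#[sigma]%g)%:R^-1 *: \sum_(g in <[sigma]>%g) p_cycletype N g.

(* Plethysm with p_1^r: substitute p_k |-> p_k^r for all k. *)
Definition pleth_p1r (N r : nat) (f : {mpoly rat[N]}) : {mpoly rat[N]} :=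
  f \mPo [tuple ('X_i : {mpoly rat[N]}) ^+ r | i < N].

(* Main.v *)
Require Import Defs.
From HB Require Import structures.
From mathcomp Require Import all_boot all_order all_algebra all_fingroup all_solvable.
From mathcomp Require Import mpoly.
Set Implicit Arguments. Unset Strict Implicit. Unset Printing Implicit Defensive.

Section Orbits.
Variable T : finType.
Local Open Scope group_scope.
Implicit Types (h g : {perm T}) (x : T).

Lemma fix_dvd h x i : ((h ^+ i) x == x) = (#|porbit h x| %| i).
Proof.
set L := #|porbit h x|.
have hL : iter L h x = x := iter_porbit h x.
have hqL q : iter (q * L) h x = x.
  by elim: q => // q IH; rewrite mulSn iterD IH hL.
have L0 : 0 < L by rewrite lt0n card_porbit_neq0.
rewrite permX {1}(divn_eq i L) addnC iterD hqL /dvdn.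
have ltk : i %% L < L by rewrite ltn_pmod.
case: (posnP (i %% L)) => [->|kpos]; first by rewrite eqxx.
idtac.
have := nth_uniq x (i := i %% L) (j := 0) _ _ (uniq_traject_porbit h x).
rewrite !size_traject !nth_traject // => /(_ ltk L0) ->.
by rewrite (gtn_eqF kpos).
Qed.

Lemma coprime_div_gcd a b : 0 < gcdn a b -> coprime (a %/ gcdn a b) (b %/ gcdn a b).
Proof.
move=> d0; rewrite /coprime -(eqn_pmul2r d0) muln_gcdl !divnK ?dvdn_gcdl ?dvdn_gcdr //.
by rewrite mul1n.
Qed.

Lemma card_porbit_mem g x y : x \in porbit g y -> #|porbit g x| = #|porbit g y|.
Proof. by rewrite -eq_porbit_mem => /eqP ->. Qed.

Lemma card_porbitX g x j :
  #|porbit (g ^+ j) x| = #|porbit g x| %/ gcdn #|porbit g x| j.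
Proof.
set L := #|porbit g x|.
have L0 : 0 < L by rewrite lt0n card_porbit_neq0.
have G0 : 0 < gcdn L j by rewrite gcdn_gt0 L0.
have key i : (#|porbit (g ^+ j) x| %| i) = (L %/ gcdn L j %| i).
  rewrite -fix_dvd -expgM fix_dvd -/L.
  rewrite [(j * i)%N](_ : _ = (j %/ gcdn L j * i) * gcdn L j)%N; last first.
    by rewrite mulnAC divnK ?dvdn_gcdr.
  rewrite {1}(_ : L = L %/ gcdn L j * gcdn L j)%N; last by rewrite divnK ?dvdn_gcdl.
  rewrite dvdn_pmul2r //.
  by apply: Gauss_dvdr; rewrite coprime_div_gcd.
apply/eqP; rewrite eqn_dvd key dvdnn /= -key dvdnn //.
Qed.


Definition ct g := [seq #|(C : {set T})| | C <- enum (porbits g)].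
Definition Q g k := #|[pred x | #|porbit g x| == k]|.

Lemma Q_count g k : Q g k = (count_mem k (ct g) * k)%N.
Proof.
rewrite /Q /ct count_map -sum1_card.
rewrite (partition_big (porbit g) (mem (porbits g))) /=; last first.
  by move=> x _; apply/imsetP; exists x.
rewrite -sum1_count big_distrl /= big_enum_cond /=.
rewrite [RHS]big_mkcondr /=; apply: eq_bigr => C /imsetP [y _ ->].
rewrite (eq_bigl (fun x => (#|porbit g y| == k) && (x \in porbit g y))); last first.
  move=> x /=; rewrite eq_porbit_mem inE.
  by case Hx: (x \in porbit g y); [rewrite (card_porbit_mem Hx) | rewrite !andbF].
case: eqP => [<-|_]; last by rewrite big_pred0.
by rewrite mul1n sum1_card.
Qed.

Lemma Q_pow g j k M : #|T| < M ->
  Q (g ^+ j) k = (\sum_(a < M | a %/ gcdn a j == k) Q g a)%N.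
Proof.
move=> TM; rewrite /Q.
under [RHS]eq_bigr do rewrite -sum1_card.
rewrite (exchange_big_dep xpredT) //= -sum1_card big_mkcond /=.
apply: eq_bigr => x _.
have ltLx : #|porbit g x| < M.
  by apply: leq_ltn_trans TM; apply: max_card.
rewrite (eq_bigl (fun a : 'I_M => (#|porbit g x| %/ gcdn #|porbit g x| j == k)
                                  && (a == Ordinal ltLx))); last first.
  move=> a /=; rewrite -val_eqE /= inE [_ == nat_of_ord a]eq_sym.
  by case: (_ =P #|porbit g x|) => [->|]; rewrite ?andbF.
rewrite inE card_porbitX.
by case: eqP => _; [rewrite big_pred1_eq | rewrite big_pred0].
Qed.

Lemma ct_pos g : 0 \notin ct g.
Proof.
apply/mapP => -[C]; rewrite mem_enum => /imsetP [y _ ->] /esym /eqP.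
by rewrite (negbTE (card_porbit_neq0 _ _)).
Qed.

Lemma fixed_all g : (g == 1) = (Q g 1%N == #|T|).
Proof.
have E x : (#|porbit g x| == 1%N) = (g x == x).
  by rewrite -dvdn1 -fix_dvd expg1.
rewrite /Q (eq_card (B := [pred x | g x == x])); last by move=> x; rewrite !inE /= E.
apply/eqP/eqP => [->|H].
  by apply: eq_card => x; rewrite !inE /= perm1 eqxx.
apply/permP => x; rewrite perm1; apply/eqP.
have := cardC [pred x | g x == x]; rewrite H -{2}[#|T|]addn0 => /eqP.
rewrite eqn_add2l => /eqP /card0_eq /(_ x) /=.
by rewrite !inE /= => /negbFE.
Qed.

End Orbits.

Lemma count_part_rep (s : seq nat) r k :
  count_mem k (part_rep s r) = (r * count_mem k s)%N.
Proof.
elim: s => [|a s IH]; first by rewrite muln0.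
rewrite /part_rep /= count_cat -/(part_rep s r) IH count_nseq /=.
by rewrite mulnDr mulnC.
Qed.

Import GRing.Theory.
Local Open Scope ring_scope.

Lemma prod_nseq (R : comRingType) (F : nat -> R) r a :
  \prod_(x <- nseq r a) F x = F a ^+ r.
Proof. by elim: r => [|r IH]; rewrite ?big_nil ?expr0 // big_cons IH exprS. Qed.

Lemma prod_part_rep (R : comRingType) (F : nat -> R) s r :
  \prod_(a <- part_rep s r) F a = (\prod_(a <- s) F a) ^+ r.
Proof.
elim: s => [|a s IH]; first by rewrite /part_rep /= big_nil expr1n.
rewrite /part_rep /= big_cat -/(part_rep s r) IH prod_nseq big_cons.
by rewrite exprMn.
Qed.

Lemma sum_cycle (gT : finGroupType) (x : gT) (V : nmodType) (F : gT -> V) :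
  \sum_(h in <[x]>%g) F h = \sum_(i < #[x]%g) F (x ^+ i)%g.
Proof.
have -> : <[x]>%g = (fun i : 'I_#[x]%g => (x ^+ i)%g) @: setT.
  apply/setP => y; apply/idP/imsetP => [/cyclePmin [i lti ->] | [i _ ->]].
    by exists (Ordinal lti).
  exact: mem_cycle.
rewrite big_imset /=; last first.
  move=> i j _ _ /eqP; rewrite eq_expg_mod_order !modn_small // => /eqP.
  exact: val_inj.
by apply: eq_bigl => i; rewrite inE.
Qed.

Lemma pct N n (g : 'S_n) : p_cycletype N g = \prod_(a <- ct g) psum N a.
Proof. by rewrite /p_cycletype big_map big_enum. Qed.

Lemma pleth_psum N r a : (0 < r)%N ->
  psum N a \mPo [tuple ('X_i : {mpoly rat[N]}) ^+ r | i < N] = psum N a ^+ r.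
Proof.
move=> r0; rewrite /psum; case: insubP => [i _ _|_].
  by rewrite comp_mpolyXU -tnth_nth tnth_mktuple.
by rewrite comp_mpoly0 expr0n gtn_eqF.
Qed.

Theorem mainTheorem2 (n r : nat) (alpha : seq nat) (N : nat)
  (sigma : 'S_n) (tau : 'S_(n * r)) :
  is_partition alpha n -> (1 <= r)%N -> (n * r <= N)%N ->
  has_cycle_type sigma alpha ->
  has_cycle_type tau (part_rep alpha r) ->
  pleth_p1r r (cyclicC N sigma) = cyclicC N tau.
Proof.
move=> _ r0 _ hs ht.
have hs' : perm_eq (ct sigma) alpha := hs.
have ht' : perm_eq (ct tau) (part_rep alpha r) := ht.
set M := (n * r).+1.
have nM : (#|'I_n| < M)%N by rewrite card_ord ltnS leq_pmulr.
have rM : (#|'I_(n * r)| < M)%N by rewrite card_ord.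
have QtQs a : Q tau a = (r * Q sigma a)%N.
  rewrite !Q_count (seq.permP ht') (seq.permP hs') count_part_rep.
  by rewrite mulnA.
have QtQsj j k : Q (tau ^+ j)%g k = (r * Q (sigma ^+ j)%g k)%N.
  rewrite (Q_pow _ _ _ rM) (Q_pow _ _ _ nM) big_distrr /=.
  by apply: eq_bigr => a _; rewrite QtQs.
have ct_rel j : perm_eq (ct (tau ^+ j)%g) (part_rep (ct (sigma ^+ j)%g) r).
  apply/allP => k _; rewrite /= count_part_rep; apply/eqP.
  case: (posnP k) => [->|k0].
    by rewrite !(count_memPn (ct_pos _)) muln0.
  apply/eqP; rewrite -(eqn_pmul2r k0) -mulnA -!Q_count QtQsj //.
have fixE m : ((tau ^+ m)%g == 1%g) = ((sigma ^+ m)%g == 1%g).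
  by rewrite !fixed_all QtQsj !card_ord [(n * r)%N]mulnC eqn_pmul2l.
have ot : #[tau]%g = #[sigma]%g.
  apply/eqP; rewrite eqn_dvd !order_dvdn (fixE #[sigma]%g) -(fixE #[tau]%g).
  by rewrite !expg_order !eqxx.
rewrite /pleth_p1r /cyclicC comp_mpolyZ !sum_cycle ot; congr (_ *: _).
rewrite raddf_sum; apply: eq_bigr => i _.
rewrite !pct (perm_big _ (ct_rel i)) prod_part_rep.
rewrite -[LHS]/(_ \mPo _) (rmorph_prod (comp_mpoly [tuple ('X_i : {mpoly rat[N]}) ^+ r | i < N])) -prodrXl.
by apply: eq_bigr => a _; apply: pleth_psum.
Qed.
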